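(* Let $C$ be a $4$-dimensional simple coalgebra over an algebraically closed field $\Bbbk$ of characteristic zero and $T:C\to C$ a coalgebra automorphism of finite order. If $\operatorname{Tr}(T)=0$, then $\operatorname{ord}(T)=2$. *)

(* Defs.v *)
(* Tensors in K^n (x) K^n are represented as n x n matrices: the (j,k) entry is
   the coefficient of e_j (x) e_k, so x (x) y = x^T *m y. *)
From HB Require Import structures.
From mathcomp Require Import all_boot all_order all_algebra.
Set Implicit Arguments. Unset Strict Implicit. Unset Printing Implicit Defensive.
Import Order.TTheory GRing.Theory Num.Theory.
Local Open Scope ring_scope.

(* Structure data: Delta(e_i) = sum_{j,k} (cm i) j k  e_j (x) e_k ,
   epsilon(e_i) = cu 0 i. *)
Record coalg_data (K : fieldType) (n : nat) := CoalgData {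
  cm : 'I_n -> 'M[K]_n;
  cu : 'rV[K]_n
}.

Section Coalg.
Variables (K : fieldType) (n : nat) (C : coalg_data K n).

Definition comul (v : 'rV[K]_n) : 'M[K]_n := \sum_(i < n) v 0 i *: cm C i.
Definition counit (v : 'rV[K]_n) : K := \sum_(i < n) v 0 i * cu C 0 i.

(* coassociativity (Delta (x) id) Delta = (id (x) Delta) Delta and the
   two counit laws, written on basis vectors *)
Definition is_coalgebra : Prop :=
  [/\ (forall i l m p : 'I_n,
         \sum_(a < n) cm C i a p * cm C a l m = \sum_(b < n) cm C i l b * cm C b m p),
      (forall i b : 'I_n, \sum_(a < n) cu C 0 a * cm C i a b = (i == b)%:R)
    & (forall i a : 'I_n, \sum_(b < n) cm C i a b * cu C 0 b = (i == a)%:R)].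

Definition in_tensor_square (V : {vspace 'rV[K]_n}) (X : 'M[K]_n) : Prop :=
  exists m (x y : 'I_m -> 'rV[K]_n),
    (forall i, x i \in V /\ y i \in V) /\ X = \sum_(i < m) (x i)^T *m y i.

Definition subcoalgebra (V : {vspace 'rV[K]_n}) : Prop :=
  forall v, v \in V -> in_tensor_square V (comul v).

Definition simple_coalgebra : Prop :=
  (0 < n)%N /\ forall V, subcoalgebra V -> V = 0%VS \/ V = fullv.

(* a linear map T : C -> C acting on row vectors, v |-> v *m T.
   T (x) T acts on tensors by X |-> T^T *m X *m T. *)
Definition coalgebra_map (T : 'M[K]_n) : Prop :=
  (forall v, comul (v *m T) = T^T *m comul v *m T) /\
  (forall v, counit (v *m T) = counit v).

Definition coalgebra_automorphism (T : 'M[K]_n) : Prop :=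
  coalgebra_map T /\ T \in unitmx.
End Coalg.

Definition has_finite_order (K : fieldType) (n : nat) (T : 'M[K]_n.+1) : Prop :=
  exists m, (0 < m)%N /\ T ^+ m = 1.

Definition has_order (K : fieldType) (n : nat) (T : 'M[K]_n.+1) (k : nat) : Prop :=
  [/\ (0 < k)%N, T ^+ k = 1 & forall j, (0 < j < k)%N -> T ^+ j != 1].

(* Main.v *)
Require Import Defs.
From HB Require Import structures.
From mathcomp Require Import all_boot all_order all_algebra.
From mathcomp Require Import ring zify.
Set Implicit Arguments. Unset Strict Implicit. Unset Printing Implicit Defensive.
Import Order.TTheory GRing.Theory Num.Theory.
Local Open Scope ring_scope.

Section Alg.
Variables (K : fieldType) (n : nat) (C : coalg_data K n).

Lemma sum_perm4 (F : 'I_n -> 'I_n -> 'I_n -> 'I_n -> K) :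
  \sum_a \sum_p \sum_l \sum_m F a p l m = \sum_l \sum_m \sum_p \sum_a F a p l m.
Proof.
rewrite exchange_big; under eq_bigr do rewrite exchange_big.
under eq_bigr do under eq_bigr do rewrite exchange_big.
rewrite exchange_big; apply: eq_bigr => l _; by rewrite exchange_big.
Qed.

Lemma sum_perm4' (F : 'I_n -> 'I_n -> 'I_n -> 'I_n -> K) :
  \sum_l \sum_b \sum_m \sum_p F l b m p = \sum_l \sum_m \sum_p \sum_b F l b m p.
Proof.
apply: eq_bigr => l _.
rewrite exchange_big; apply: eq_bigr => m _; by rewrite exchange_big.
Qed.

Definition amul (f g : 'rV[K]_n) : 'rV[K]_n := \row_i (f *m cm C i *m g^T) 0 0.

Lemma bilE (f g : 'rV[K]_n) (M : 'M[K]_n) :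
  (f *m M *m g^T) 0 0 = \sum_j \sum_k f 0 j * M j k * g 0 k.
Proof.
rewrite mxE; under eq_bigr do rewrite mxE mulr_suml.
rewrite exchange_big; apply: eq_bigr => k _; apply: eq_bigr => j _.
by rewrite mxE.
Qed.

Lemma amulE f g i : amul f g 0 i = \sum_j \sum_k f 0 j * cm C i j k * g 0 k.
Proof. by rewrite mxE bilE. Qed.

Definition Rmat (g : 'rV[K]_n) : 'M[K]_n := \matrix_(j, i) (cm C i *m g^T) j 0.
Definition Lmat (f : 'rV[K]_n) : 'M[K]_n := \matrix_(k, i) (f *m cm C i) 0 k.

Lemma amulRE f g : amul f g = f *m Rmat g.
Proof.
apply/rowP => i; rewrite mxE.
transitivity ((f *m (cm C i *m g^T)) 0 0); first by rewrite mulmxA.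
by rewrite !mxE; apply: eq_bigr => j _; rewrite /Rmat mxE.
Qed.

Lemma amulLE f g : amul f g = g *m Lmat f.
Proof.
apply/rowP => i; rewrite !mxE; apply: eq_bigr => k _; rewrite !mxE mulrC.
by [].
Qed.

Lemma amulDl f1 f2 g : amul (f1 + f2) g = amul f1 g + amul f2 g.
Proof. by rewrite !amulRE mulmxDl. Qed.
Lemma amulDr f g1 g2 : amul f (g1 + g2) = amul f g1 + amul f g2.
Proof. by rewrite !amulLE mulmxDl. Qed.
Lemma amulZl c f g : amul (c *: f) g = c *: amul f g.
Proof. by rewrite !amulRE scalemxAl. Qed.
Lemma amulZr c f g : amul f (c *: g) = c *: amul f g.
Proof. by rewrite !amulLE scalemxAl. Qed.
Lemma amul0l g : amul 0 g = 0.
Proof. by rewrite amulRE mul0mx. Qed.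
Lemma amul0r g : amul g 0 = 0.
Proof. by rewrite amulLE mul0mx. Qed.
Lemma amulNl f g : amul (- f) g = - amul f g.
Proof. by rewrite !amulRE mulNmx. Qed.
Lemma amulNr f g : amul f (- g) = - amul f g.
Proof. by rewrite !amulLE mulNmx. Qed.

Lemma comul_delta i : comul C (delta_mx 0 i) = cm C i.
Proof.
rewrite /comul (bigD1 i) //= mxE !eqxx scale1r big1 ?addr0 // => j /negbTE ji.
by rewrite mxE ji andbF scale0r.
Qed.

Lemma sigma_hom (T : 'M[K]_n) : coalgebra_map C T ->
  forall f g, amul (f *m T^T) (g *m T^T) = amul f g *m T^T.
Proof.
move=> [hT _] f g; apply/rowP => i.
have := hT (delta_mx 0 i); rewrite comul_delta => e.
rewrite mxE.
have -> : (f *m T^T) *m cm C i *m (g *m T^T)^T = f *m (T^T *m cm C i *m T) *m g^T.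
  by rewrite trmx_mul trmxK !mulmxA.
rewrite -e /comul mulmx_sumr mulmx_suml summxE [in RHS]mxE; apply: eq_bigr => m _.
rewrite -scalemxAr -scalemxAl mxE !mxE mulrC; congr (_ * _).
by rewrite (bigD1 i) //= mxE !eqxx mul1r big1 ?addr0 // => j /negbTE ji; rewrite mxE ji andbF mul0r.
Qed.

Lemma sigma_unit (T : 'M[K]_n) : coalgebra_map C T -> cu C *m T^T = cu C.
Proof.
move=> [_ hT]; apply/rowP => i.
have := hT (delta_mx 0 i); rewrite /counit => e.
rewrite -rowE in e.
have -> : cu C 0 i = \sum_(j < n) (delta_mx 0 i : 'rV[K]_n) 0 j * cu C 0 j.
  rewrite (bigD1 i) //= mxE !eqxx mul1r big1 ?addr0 //.
  by move=> j /negbTE ji; rewrite mxE ji andbF mul0r.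
rewrite -e mxE; apply: eq_bigr => j _; rewrite !mxE mulrC.
by [].
Qed.

Hypothesis hC : is_coalgebra C.

Lemma amulA f g h : amul (amul f g) h = amul f (amul g h).
Proof.
case: hC => ca _ _.
apply/rowP => i; rewrite !amulE.
transitivity (\sum_l \sum_m \sum_p \sum_(a < n) 
   f 0 l * g 0 m * h 0 p * (cm C i a p * cm C a l m)).
  under eq_bigr do under eq_bigr do rewrite amulE !mulr_suml.
  under eq_bigr do under eq_bigr do under eq_bigr do rewrite !mulr_suml.
  rewrite sum_perm4; do 4! (apply: eq_bigr => ? _); ring.
transitivity (\sum_l \sum_m \sum_p \sum_(b < n) 
   f 0 l * g 0 m * h 0 p * (cm C i l b * cm C b m p)).
  do 3! (apply: eq_bigr => ? _); rewrite -!mulr_sumr; congr (_ * _); exact: ca.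
rewrite -sum_perm4'.
apply: eq_bigr => l _; apply: eq_bigr => b _.
rewrite amulE mulr_sumr; apply: eq_bigr => m _.
rewrite mulr_sumr; apply: eq_bigr => p _; ring.
Qed.

Lemma amul1l g : amul (cu C) g = g.
Proof.
case: hC => _ cl _.
apply/rowP => i; rewrite amulE exchange_big /=.
transitivity (\sum_k (\sum_j cu C 0 j * cm C i j k) * g 0 k).
  by apply: eq_bigr => k _; rewrite mulr_suml.
rewrite (bigD1 i) //= cl eqxx mul1r big1 ?addr0 // => k /negbTE ki.
by rewrite cl eq_sym ki mul0r.
Qed.

Lemma amul1r f : amul f (cu C) = f.
Proof.
case: hC => _ _ cr.
apply/rowP => i; rewrite amulE.
transitivity (\sum_j f 0 j * (\sum_k cm C i j k * cu C 0 k)).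
  by apply: eq_bigr => j _; rewrite mulr_sumr; apply: eq_bigr => k _; rewrite mulrA.
rewrite (bigD1 i) //= cr eqxx mulr1 big1 ?addr0 // => k /negbTE ki.
by rewrite cr eq_sym ki mulr0.
Qed.


Definition left_ideal m (M : 'M[K]_(m, n)) :=
  forall a f, (f <= M)%MS -> (amul a f <= M)%MS.
Definition right_ideal m (M : 'M[K]_(m, n)) :=
  forall a f, (f <= M)%MS -> (amul f a <= M)%MS.

Lemma pairingE f g v : f *m comul C v *m g^T = amul f g *m v^T.
Proof.
apply/rowP => j; rewrite ord1 /comul mulmx_sumr mulmx_suml summxE [in RHS]mxE.
apply: eq_bigr => i _; rewrite -scalemxAr -scalemxAl mxE !mxE.
by rewrite mulrC.
Qed.

Lemma trmx_sum_row m p (A : 'M[K]_(m, n)) (B : 'M[K]_(m, p)) :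
  A^T *m B = \sum_i (row i A)^T *m row i B.
Proof.
apply/matrixP => j k; rewrite mxE summxE; apply: eq_bigr => i _.
by rewrite [RHS]mxE big_ord1 !mxE.
Qed.

Lemma orth_sub (v h : 'rV[K]_n) m (M : 'M[K]_(m, n)) :
  v *m M^T = 0 -> (h <= M)%MS -> h *m v^T = 0.
Proof.
move=> vM /submxP [w ->]; apply: trmx_inj; rewrite trmx0 !trmx_mul trmxK.
by rewrite mulmxA vM mul0mx.
Qed.

Lemma sandwich (Y N P : 'M[K]_n) : Y *m P *m N = Y -> N^T *m P^T *m Y = Y ->
  Y = N^T *m (P^T *m Y *m P *m N).
Proof. by move=> e1 e2; rewrite !mulmxA e2 e1. Qed.

Lemma ideal_trivial (hs : simple_coalgebra C) m (M : 'M[K]_(m, n)) :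
  left_ideal M -> right_ideal M -> M = 0 \/ row_full M.
Proof.
move=> hl hr; set N := kermx M^T.
pose X := [tuple row i N | i < n].
pose V := span X.
have memV v : (v \in V) = (v <= N)%MS.
  apply/idP/idP => [/coord_span -> | /submxP [w ->]].
    apply: summx_sub => i _; apply: scalemx_sub.
    by rewrite /X nth_mktuple row_sub.
  rewrite mulmx_sum_row; apply: memv_suml => i _; apply: memvZ.
  by apply: memv_span; rewrite /X; apply/mapP; exists i; rewrite ?mem_enum.
have sc : subcoalgebra C V.
  move=> v; rewrite memV => /sub_kermxP vN.
  set Y := comul C v.
  have h1 : M *m Y = 0.
    apply/row_matrixP => k; rewrite row_mul row0.
    apply/rowP => j; rewrite [RHS]mxE.
    have := pairingE (row k M) (delta_mx 0 j : 'rV[K]_n) v.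
    rewrite (orth_sub vN) ?hr ?row_sub // => e.
    transitivity ((row k M *m Y *m (delta_mx 0 j : 'rV[K]_n)^T) 0 0).
      by rewrite trmx_delta -colE [RHS]mxE.
    by rewrite e mxE.
  have h2 : Y *m M^T = 0.
    apply/matrixP => j k; rewrite [RHS]mxE.
    have := pairingE (delta_mx 0 j : 'rV[K]_n) (row k M) v.
    rewrite (orth_sub vN) ?hl ?row_sub // => e.
    transitivity (((delta_mx 0 j : 'rV[K]_n) *m Y *m (row k M)^T) 0 0).
      by rewrite -rowE !mxE; apply: eq_bigr => l _; rewrite !mxE.
    by rewrite e mxE.
  have s1 : (Y <= N)%MS by apply/sub_kermxP.
  have s2 : (Y^T <= N)%MS by apply/sub_kermxP; rewrite -trmx_mul h1 trmx0.
  set P := pinvmx N.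
  have e1 : Y *m P *m N = Y := mulmxKpV s1.
  have e2 : N^T *m P^T *m Y = Y.
    have := congr1 trmx (mulmxKpV s2); rewrite (trmx_mul (Y^T *m P) N) (trmx_mul Y^T P) trmxK => e2. by rewrite -mulmxA.
  have eY : Y = N^T *m (P^T *m Y *m P *m N).
    exact: sandwich e1 e2.
  exists n, (fun i => row i N), (fun i => row i (P^T *m Y *m P *m N)); split.
    by move=> i; rewrite !memV row_sub row_mul submxMl.
  by rewrite {1}eY trmx_sum_row.
case: (hs.2 V sc) => hV; [right | left].
  have N0 : N = 0.
    apply/row_matrixP => i; rewrite row0; apply/eqP.
    by rewrite -memv0 -hV memV row_sub.
  have := kermx_eq0 M^T; rewrite -/N N0 eqxx /row_free mxrank_tr => /esym/eqP.
  by rewrite /row_full => ->.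
apply: trmx_inj; rewrite trmx0; apply/row_matrixP => j.
by rewrite rowE row0; apply/sub_kermxP; rewrite -memV hV memvf.
Qed.

End Alg.

Section Closed.
Variables (K : closedFieldType) (n : nat) (C : coalg_data K n).
Hypothesis hC : is_coalgebra C.

Lemma not_full_ex m (M : 'M[K]_(m, n)) : ~~ row_full M -> exists w : 'rV[K]_n, ~~ (w <= M)%MS.
Proof. by rewrite -sub1mx => /row_subPn [i Hi]; exists (row i 1%:M). Qed.

Lemma exists_left_ideal (n1 : (1 < n)%N) :
  exists L : 'M[K]_n, [/\ left_ideal C L, L != 0 & ~~ row_full L].
Proof.
have [a Ha] : exists a : 'rV[K]_n, ~~ (a <= cu C)%MS.
  apply: not_full_ex; rewrite /row_full; apply/eqP => e.
  by have := rank_leq_row (cu C); rewrite e; move: n1; rewrite ltnNge => /negbTE ->.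
have [lam] : exists lam, root (char_poly (Lmat C a)) lam.
  by apply/closed_rootP; rewrite size_char_poly; case: n n1.
rewrite -eigenvalue_root_char => /eigenvalueP [x hx x0].
set z := a - lam *: cu C.
have zx : amul C z x = 0.
  by rewrite amulDl amulNl amulZl amul1l // amulLE hx subrr.
have z0 : z != 0.
  apply: contra Ha; rewrite /z subr_eq0 => /eqP ->.
  exact: scalemx_sub (submx_refl _).
exists (Rmat C z); split.
- by move=> b f /submxP [w ->]; rewrite -amulRE -(amulA hC) amulRE submxMl.
- apply: contraNneq z0 => R0.
  by rewrite -(amul1l hC z) amulRE R0 mulmx0.
apply/negP => full.
have : (cu C <= Rmat C z)%MS by rewrite submx_full.
case/submxP => w ew.
have := amul1l hC x; rewrite ew -amulRE (amulA hC) zx amul0r => x0'.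
by move: x0; rewrite -x0' eqxx.
Qed.

Lemma no_codim1 (hs : simple_coalgebra C) (L : 'M[K]_n) :
  left_ideal C L -> L != 0 -> \rank L = n.-1 -> False.
Proof.
move=> hL L0 rL.
have rpos : (0 < \rank L)%N by rewrite lt0n mxrank_eq0.
have nf : ~~ row_full L.
  rewrite /row_full rL; move: rpos; rewrite rL; lia.
have [w Hw] := not_full_ex nf.
have full : row_full (L + w)%MS.
  have lt : (L < L + w)%MS.
    rewrite ltmxE addsmxSl /=; apply: contra Hw => h.
    exact: submx_trans (addsmxSr L w) h.
  rewrite ltmxErank addsmxSl /= rL in lt.
  rewrite /row_full eqn_leq rank_leq_col /=.
  move: lt rpos; rewrite rL; lia.
have dec u : exists l c, (l <= L)%MS /\ u = l + c *: w.
  have : (u <= L + w)%MS by rewrite submx_full.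
  case/sub_addsmxP => [[u1 u2] /= ->]; exists (u1 *m L), (u2 0 0).
  by rewrite submxMl {1}[u2]mx11_scalar mul_scalar_mx.
set J := kermx (Rmat C w *m cokermx L).
have memJ a : (a <= J)%MS = (amul C a w <= L)%MS.
  by rewrite sub_kermx submxE amulRE mulmxA.
have hJl : left_ideal C J.
  by move=> b f; rewrite !memJ (amulA hC); apply: hL.
have hJr : right_ideal C J.
  move=> b f; rewrite !memJ (amulA hC) => fJ.
  have [l [c [lL ->]]] := dec (amul C b w).
  by rewrite amulDr amulZr addmx_sub ?hL // scalemx_sub.
case: (ideal_trivial hs hJl hJr) => [J0 | Jf].
- have := mxrank_ker (Rmat C w *m cokermx L); rewrite -/J J0 mxrank0.
  have := mxrankM_maxr (Rmat C w) (cokermx L); rewrite mxrank_coker.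
  move: rpos (rank_leq_col L); lia.
- have : (cu C <= J)%MS by rewrite submx_full.
  by rewrite memJ amul1l // (negbTE Hw).
Qed.

End Closed.

Section Rho.
Variables (K : fieldType) (n : nat) (C : coalg_data K n).
Hypothesis hC : is_coalgebra C.
Variables (r : nat) (B : 'M[K]_(r, n)).
Hypothesis hB : row_free B.
Hypothesis hBl : forall a, (B *m Lmat C a <= B)%MS.

Lemma Lmat_mul a b : Lmat C (amul C a b) = Lmat C b *m Lmat C a.
Proof.
apply/row_matrixP => i; rewrite !rowE -amulLE (amulA hC).
by rewrite amulLE [amul C b _]amulLE mulmxA.
Qed.

Lemma Lmat1 : Lmat C (cu C) = 1%:M.
Proof. by apply/row_matrixP => i; rewrite !rowE -amulLE amul1l // mulmx1. Qed.

Lemma LmatD a b : Lmat C (a + b) = Lmat C a + Lmat C b.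
Proof. by apply/row_matrixP => i; rewrite !rowE mulmxDr -!amulLE amulDl. Qed.

Lemma LmatZ c a : Lmat C (c *: a) = c *: Lmat C a.
Proof. by apply/row_matrixP => i; rewrite !rowE -scalemxAr -!amulLE amulZl. Qed.

Lemma Lmat0 : Lmat C 0 = 0.
Proof. by apply/row_matrixP => i; rewrite !rowE mulmx0 -!amulLE amul0l. Qed.

Definition rho a : 'M[K]_r := B *m Lmat C a *m pinvmx B.

Lemma rhoB a : rho a *m B = B *m Lmat C a.
Proof. exact: mulmxKpV. Qed.

Lemma rho_mul a b : rho (amul C a b) = rho b *m rho a.
Proof.
apply: (row_free_inj hB); rewrite /= rhoB Lmat_mul mulmxA -rhoB.
by rewrite -mulmxA -rhoB mulmxA.
Qed.

Lemma rho1 : rho (cu C) = 1%:M.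
Proof. by apply: (row_free_inj hB); rewrite /= rhoB Lmat1 mulmx1 mul1mx. Qed.

Lemma rho_lin a : rho a = \sum_j a 0 j *: rho (delta_mx 0 j).
Proof.
rewrite /rho {1}[a]row_sum_delta.
rewrite (big_morph (Lmat C) LmatD Lmat0) mulmx_sumr mulmx_suml.
by apply: eq_bigr => j _; rewrite LmatZ -scalemxAr -scalemxAl.
Qed.

Definition RhoM : 'M[K]_(n, r * r) := \matrix_(i < n) mxvec (rho (delta_mx 0 i)).

Lemma rhoM a : mxvec (rho a) = a *m RhoM.
Proof.
rewrite rho_lin linear_sum mulmx_sum_row; apply: eq_bigr => j _.
by rewrite linearZ rowK.
Qed.

Lemma rho_eq0 a : (rho a == 0) = (a <= kermx RhoM)%MS.
Proof. by rewrite sub_kermx -rhoM mxvec_eq0. Qed.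

Lemma RhoM_free (hs : simple_coalgebra C) : (0 < r)%N -> row_free RhoM.
Proof.
move=> r0; rewrite -kermx_eq0.
have hl : left_ideal C (kermx RhoM).
  by move=> b f; rewrite -!rho_eq0 rho_mul => /eqP ->; rewrite mul0mx.
have hr : right_ideal C (kermx RhoM).
  by move=> b f; rewrite -!rho_eq0 rho_mul => /eqP ->; rewrite mulmx0.
case: (ideal_trivial hs hl hr) => [-> //|].
move=> full; have : (cu C <= kermx RhoM)%MS by rewrite submx_full.
rewrite -rho_eq0 rho1 => /eqP/matrixP/(_ (Ordinal r0) (Ordinal r0)).
by rewrite !mxE eqxx => /eqP; rewrite oner_eq0.
Qed.

End Rho.

Section SN.
Variable K : fieldType.

Lemma sum_mrn (V : zmodType) p (F : 'I_p -> V) j : \sum_i F i *+ (i == j) = F j.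
Proof.
rewrite (bigD1 j) //= eqxx big1 ?addr0 // => i /negbTE ->; exact: mulr0n.
Qed.

Lemma sum_mrn' (V : zmodType) p (F : 'I_p -> V) j : \sum_i F i *+ (j == i) = F j.
Proof. by under eq_bigr do rewrite eq_sym; exact: sum_mrn. Qed.

Lemma dMd m (M : 'M[K]_m) (i a b j : 'I_m) :
  delta_mx i a *m M *m delta_mx b j = M a b *: delta_mx i j.
Proof.
rewrite -(@mul_delta_mx K m 1 m 0 i a) -(@mul_delta_mx K m 1 m 0 b j).
have e : delta_mx 0 a *m M *m delta_mx b 0 = (M a b)%:M :> 'M_1.
  by rewrite -rowE -colE [LHS]mx11_scalar !mxE.
by rewrite !mulmxA -(mulmxA _ (delta_mx 0 a)) -(mulmxA _ (delta_mx 0 a *m M)) e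
  mul_mx_scalar -scalemxAl mul_delta_mx.
Qed.

Lemma mulmxMnr p q r' (A : 'M[K]_(p, q)) (B : 'M[K]_(q, r')) (b : bool) :
  A *m (B *+ b) = (A *m B) *+ b.
Proof. by case: b; rewrite ?mulr0n ?mulr1n ?mulmx0. Qed.
Lemma mulmxMnl p q r' (A : 'M[K]_(p, q)) (B : 'M[K]_(q, r')) (b : bool) :
  (A *+ b) *m B = (A *m B) *+ b.
Proof. by case: b; rewrite ?mulr0n ?mulr1n ?mul0mx. Qed.

Definition phiS m (S : 'M[K]_(m * m)) (X : 'M[K]_m) : 'M[K]_m := vec_mx (mxvec X *m S).

Lemma phiSD m S X Y : @phiS m S (X + Y) = phiS S X + phiS S Y.
Proof. by rewrite /phiS linearD mulmxDl linearD. Qed.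
Lemma phiSZ m S c X : @phiS m S (c *: X) = c *: phiS S X.
Proof. by rewrite /phiS linearZ -scalemxAl linearZ. Qed.
Lemma phiS0 m S : @phiS m S 0 = 0.
Proof. by rewrite /phiS linear0 mul0mx linear0. Qed.
Lemma phiSMn m S X k : @phiS m S (X *+ k) = phiS S X *+ k.
Proof. by elim: k => [|k IH]; rewrite ?mulr0n ?phiS0 // !mulrS phiSD IH. Qed.

Lemma phiS_lin m S X :
  @phiS m S X = \sum_i \sum_j X i j *: phiS S (delta_mx i j).
Proof.
rewrite {1}[X]matrix_sum_delta (big_morph _ (phiSD S) (phiS0 S)).
apply: eq_bigr => i _; rewrite (big_morph _ (phiSD S) (phiS0 S)).
by apply: eq_bigr => j _; rewrite phiSZ.
Qed.

Lemma skolem_noether m (S : 'M[K]_(m.+1 * m.+1)) : S \in unitmx ->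
  (forall X Y, phiS S (X *m Y) = phiS S X *m phiS S Y) ->
  exists g h : 'M[K]_m.+1, g *m h = 1%:M /\ forall X, phiS S X = g *m X *m h.
Proof.
move=> Su hmul.
pose f i j := phiS S (delta_mx i j).
have fM i j k l : f i j *m f k l = f i l *+ (j == k).
  by rewrite -hmul mul_delta_mx_cond phiSMn.
have f00 : f 0 0 != 0.
  apply/eqP => /(congr1 mxvec); rewrite vec_mxK linear0 => /(congr1 (mulmx^~ (invmx S))).
  rewrite mul0mx mulmxK // => /eqP; rewrite mxvec_eq0 => /eqP/matrixP/(_ 0 0).
  by rewrite !mxE !eqxx => /eqP; rewrite oner_eq0.
have : [exists a, exists b, f 0 0 a b != 0].
  apply: contraNT f00; rewrite negb_exists => /forallP H.
  apply/eqP/matrixP => a b; rewrite [RHS]mxE; apply/eqP.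
  by move: (H a); rewrite negb_exists => /forallP/(_ b); rewrite negbK.
case/existsP => a /existsP [b nz].
pose g : 'M[K]_m.+1 := \sum_(i < m.+1) f i 0 *m delta_mx b 0 *m (delta_mx 0 i : 'M[K]_m.+1).
pose h : 'M[K]_m.+1 := \sum_(i < m.+1) delta_mx i 0 *m (delta_mx 0 a : 'M[K]_m.+1) *m f 0 i.
have key1 (j k : 'I_m.+1) : g *m delta_mx j k = f j k *m g.
  rewrite mulmx_suml mulmx_sumr.
  transitivity (\sum_i (f i 0 *m delta_mx b 0 *m (delta_mx 0 k : 'M[K]_m.+1)) *+ (i == j)).
    by apply: eq_bigr => i _; rewrite -mulmxA mul_delta_mx_cond mulmxMnr.
  rewrite sum_mrn.
  transitivity (\sum_i (f j 0 *m delta_mx b 0 *m (delta_mx 0 i : 'M[K]_m.+1)) *+ (k == i)).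
    by rewrite sum_mrn'.
  by apply: eq_bigr => i _; rewrite !mulmxA fM !mulmxMnl.
have key2 : h *m g = f 0 0 a b *: 1%:M.
  rewrite mulmx_suml.
  transitivity (\sum_(i < m.+1) f 0 0 a b *: delta_mx i i); last first.
    by rewrite -scaler_sumr -mx1_sum_delta.
  apply: eq_bigr => i _; rewrite mulmx_sumr.
  transitivity (\sum_j (delta_mx i 0 *m ((delta_mx 0 a : 'M[K]_m.+1) *m f 0 0 *m delta_mx b 0) *m (delta_mx 0 j : 'M[K]_m.+1)) *+ (i == j)).
    apply: eq_bigr => j _.
    have -> : delta_mx i 0 *m (delta_mx 0 a : 'M[K]_m.+1) *m f 0 i *m (f j 0 *m delta_mx b 0 *m (delta_mx 0 j : 'M[K]_m.+1))
       = delta_mx i 0 *m (delta_mx 0 a : 'M[K]_m.+1) *m (f 0 i *m f j 0) *m delta_mx b 0 *m (delta_mx 0 j : 'M[K]_m.+1).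
      by rewrite !mulmxA.
    by rewrite fM mulmxMnr !mulmxMnl !mulmxA.
  by rewrite sum_mrn' dMd dMd !mxE eqxx mulr1.
set c := f 0 0 a b.
have hg : (c^-1 *: h) *m g = 1%:M by rewrite -scalemxAl key2 scalerA mulVf ?scale1r.
exists g, (c^-1 *: h); split; first exact: mulmx1C.
move=> X.
have gX : g *m X = phiS S X *m g.
  rewrite {1}[X]matrix_sum_delta phiS_lin mulmx_sumr mulmx_suml.
  apply: eq_bigr => i _; rewrite mulmx_sumr mulmx_suml.
  by apply: eq_bigr => j _; rewrite -scalemxAr -scalemxAl key1.
by rewrite gX -mulmxA (mulmx1C hg) mulmx1.
Qed.
End SN.

Section Trace.
Variable K : fieldType.

Lemma tr_conj m (S : 'M[K]_(m * m)) (g h : 'M[K]_m) :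
  (forall X, phiS S X = g *m X *m h) -> \tr S = \tr g * \tr h.
Proof.
move=> H.
have e i j : S (mxvec_index i j) (mxvec_index i j) = g i i * h j j.
  transitivity (((delta_mx 0 (mxvec_index i j) : 'rV[K]_(m * m)) *m S) 0 (mxvec_index i j)).
    by rewrite -rowE mxE.
  rewrite -mxvec_delta.
  have := H (delta_mx i j); rewrite /phiS => /(congr1 mxvec); rewrite vec_mxK => ->.
  rewrite mxvecE -(@mul_delta_mx K m 1 m 0 i j) mulmxA -colE -mulmxA -rowE.
  by rewrite mxE big_ord1 !mxE.
rewrite /mxtrace (reindex (uncurry (@mxvec_index m m))) /=; last first.
  by case: (curry_mxvec_bij m m) => f f1 f2; exists f => x _; [apply: f1 | apply: f2].
rewrite mulr_suml; under [RHS]eq_bigr do rewrite mulr_sumr.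
rewrite pair_bigA /=; apply: eq_bigr => -[i j] _ /=; exact: e.
Qed.

Lemma ord2_cases (i : 'I_2) : i = 0 \/ i = 1.
Proof. by case: i => [[|[|//]]] H; [left|right]; apply/val_inj. Qed.

Lemma ch2 (g : 'M[K]_2) : \tr g = 0 -> g *m g = (g 0 0 * g 0 0 + g 0 1 * g 1 0)%:M.
Proof.
have e1 : (ord_max : 'I_2) = 1 by apply/val_inj.
have e0 : (widen_ord (leqnSn 1) ord_max : 'I_2) = 0 by apply/val_inj.
rewrite /mxtrace !big_ord_recr big_ord0 /= add0r e0 e1 => htr.
have e : g 1 1 = - g 0 0 by apply: (addrI (g 0 0)); rewrite htr subrr.
apply/matrixP => i j; rewrite !mxE !big_ord_recr big_ord0 /= add0r e0 e1.
case: (ord2_cases i) => ->; case: (ord2_cases j) => ->.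
all: rewrite ?eqxx ?mulr1n; try rewrite [_ == _]/= mulr0n; rewrite ?e; ring.
Qed.

End Trace.

Section Final.
Variables (K : closedFieldType) (C : coalg_data K 4).
Hypothesis hC : is_coalgebra C.
Hypothesis hs : simple_coalgebra C.
Variable T : 'M[K]_4.
Hypothesis hT : coalgebra_automorphism C T.
Hypothesis htr : \tr T = 0.

Lemma square_comm (g h X : 'M[K]_2) :
  g *m h = 1%:M -> (\tr g = 0 \/ \tr h = 0) ->
  g *m (g *m X *m h) *m h = X.
Proof.
move=> gh tgh.
have E : g *m (g *m X *m h) *m h = (g *m g) *m X *m (h *m h) by rewrite !mulmxA.
have I : (g *m g) *m (h *m h) = 1%:M.
  by rewrite -mulmxA (mulmxA g h h) gh mul1mx gh.
case: tgh => [tg|th].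
  have e := ch2 tg.
  by rewrite E e -scalar_mxC -e -mulmxA I mulmx1.
have e := ch2 th.
by rewrite E e -mulmxA scalar_mxC mulmxA -e I mul1mx.
Qed.

Lemma final_step (B : 'M[K]_(2, 4)) :
  row_free B -> (forall a, (B *m Lmat C a <= B)%MS) -> T *m T = 1%:M.
Proof.
move=> hB hBl.
set R := RhoM C B.
have Rf : row_free R by apply: RhoM_free.
have Ru : (R : 'M[K]_4) \in unitmx by rewrite -row_free_unit.
set S : 'M[K]_(2 * 2) := invmx R *m T^T *m R.
have TTu : T^T \in unitmx by rewrite unitmx_tr; case: hT.
have Su : S \in unitmx by rewrite !unitmx_mul unitmx_inv Ru TTu.
have rhoT a : rho C B (a *m T^T) = phiS S (rho C B a).
  apply: (can_inj mxvecK).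
  rewrite /phiS vec_mxK !rhoM // !mulmxA. by rewrite -/R mulmxK.
have surj (X : 'M[K]_2) : X = rho C B (mxvec X *m invmx R).
  apply: (can_inj mxvecK).
  by rewrite rhoM // mulmxKV.
have hmul X Y : phiS S (X *m Y) = phiS S X *m phiS S Y.
  rewrite [X]surj [Y]surj; set a := mxvec X *m _; set b := mxvec Y *m _.
  rewrite -rho_mul // -!rhoT -sigma_hom; [|by case: hT].
  by rewrite rho_mul.
have [g [h [gh hgh]]] := skolem_noether Su hmul.
have trS : \tr S = \tr T.
  by rewrite /S -mulmxA mxtrace_mulC -mulmxA mulmxV // mulmx1 mxtrace_tr.
have tgh : \tr g = 0 \/ \tr h = 0.
  have : \tr g * \tr h == 0 by rewrite -(tr_conj hgh) trS htr.
  by rewrite mulf_eq0 => /orP [/eqP|/eqP]; [left|right].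
have SS : S *m S = 1%:M.
  apply/row_matrixP => k; rewrite row1 !rowE.
  rewrite -[delta_mx 0 k](vec_mxK) mulmxA.
  have e u : mxvec u *m S = mxvec (phiS S u) by rewrite /phiS vec_mxK.
  by rewrite e e !hgh square_comm.
have eT : T^T = R *m S *m invmx R by rewrite /S !mulmxA mulmxV // mul1mx mulmxK.
have : T^T *m T^T = 1%:M.
  clearbody S; rewrite eT !mulmxA mulmxKV // -(mulmxA R S S) SS mulmx1 mulmxV //.
by rewrite -trmx_mul => /(congr1 trmx); rewrite trmxK trmx1.
Qed.

End Final.

Theorem lemma2p2 (K : closedFieldType) (hK : [pchar K] =i pred0)
  (C : coalg_data K 4) (hC : is_coalgebra C) (hs : simple_coalgebra C)
  (T : 'M[K]_4) (hT : coalgebra_automorphism C T) (hfin : has_finite_order T)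
  (htr : \tr T = 0) :
  has_order T 2.
Proof.
have [L [hL L0 Lnf]] := exists_left_ideal hC (isT : (1 < 4)%N).
have r0 : (0 < \rank L)%N by rewrite lt0n mxrank_eq0.
have r4 : (\rank L < 4)%N by rewrite ltn_neqAle Lnf rank_leq_col.
have r3 : \rank L <> 3%N by move=> e; apply: (no_codim1 hC hs hL L0 e).
have hBl : forall a, (row_base L *m Lmat C a <= row_base L)%MS.
  move=> a; apply/row_subP => i; rewrite row_mul -amulLE (eq_row_base L).
  apply: hL; by rewrite -(eq_row_base L) row_sub.
have rr : (4 <= \rank L * \rank L)%N.
  have := RhoM_free hC (row_base_free L) hBl hs r0; rewrite /row_free => /eqP e.
  by apply: leq_trans _ (rank_leq_col (RhoM C (row_base L))); rewrite e.
have r2 : \rank L = 2%N by move: r0 r4 r3 rr; nia.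
have [B [hB hB']] : exists B : 'M[K]_(2,4), row_free B /\ forall a, (B *m Lmat C a <= B)%MS.
  move: (row_base L) (row_base_free L) hBl; rewrite r2 => B hB hB'.
  by exists B.
have TT := final_step hC hs hT htr hB hB'.
split => //.
move=> j /andP [j0 j2]; have -> : j = 1%N by lia.
rewrite expr1; apply/eqP => T1; move: htr; rewrite T1 mxtrace1 => /eqP.
by move/pcharf0P: hK => ->.
Qed.
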